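(* Let $\gamma_1,\gamma_2>0$, let $M\ge1$ be an integer, and let $Z\sim\mathrm{Gamma}(M,1)$ and $Y\sim\mathrm{Gamma}(1,1)$ be independent. Let $X=\dfrac{\gamma_1 Z}{1+\gamma_2 Y}$. Then $$\mathbb{E}[\log_2(1+X)]=\log_2(e)\sum_{i=0}^{M-1}\sum_{l=0}^{i}\frac{\gamma_1^{\,l+1-i}}{\gamma_2\,(i-l)!}\,I_1\!\left(\frac{1}{\gamma_1},\frac{\gamma_1}{\gamma_2},i,l+1\right),$$ where $I_1(a,b,m,n)=\displaystyle\int_0^\infty\frac{x^m e^{-ax}}{(x+b)^n(x+1)}\,dx$.
   Context: $\mathrm{Gamma}(M,1)$ denotes the distribution of a sum of $M$ i.i.d. unit-mean exponential random variables (the paper writes $\chi^2_{2M}$). This quantity is denoted $R_I^{(2)}(\gamma_1,\gamma_2,M)$. *)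

(* Defs.v *)
From Stdlib Require Import Reals Lra Lia ZArith.
Open Scope R_scope.

Definition log2 (x : R) : R := ln x / ln 2.

Definition ImpInt (f : R -> R) (l : R) : Prop :=
  (forall b, 0 <= b -> exists pr : Riemann_integrable f 0 b, True) /\
  (forall eps, 0 < eps -> exists B, 0 <= B /\
     forall b (pr : Riemann_integrable f 0 b), B <= b ->
       Rabs (RiemannInt pr - l) < eps).

Definition gamma_pdf (M : nat) (z : R) : R :=
  z ^ (M - 1) * exp (- z) / INR (fact (M - 1)).

Definition exp_pdf (y : R) : R := exp (- y).

Definition I1_integrand (a b : R) (m n : nat) (x : R) : R :=
  x ^ m * exp (- (a * x)) / ((x + b) ^ n * (x + 1)).

(* Main.v *)
Require Import Defs.
From Coquelicot Require Import Coquelicot.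
From Stdlib Require Import Reals Lra Lia ZArith Classical.
Open Scope R_scope.

Definition Imp (f : R -> R) (l : R) : Prop :=
  (forall b, 0 <= b -> ex_RInt f 0 b) /\ is_lim (fun b => RInt f 0 b) p_infty l.

Lemma lim_p_eps F (l : R) : is_lim F p_infty l ->
  forall eps, 0 < eps -> exists B, forall b, B < b -> Rabs (F b - l) < eps.
Proof. intros H eps He. apply is_lim_spec in H. destruct (H (mkposreal eps He)) as [B HB].
  exists B. exact HB. Qed.

Lemma lim_p_eps_inv F (l : R) :
  (forall eps, 0 < eps -> exists B, forall b, B < b -> Rabs (F b - l) < eps) ->
  is_lim F p_infty l.
Proof. intros H. apply is_lim_spec. intros eps. destruct (H eps (cond_pos eps)) as [B HB].
  exists B. exact HB. Qed.

Lemma Imp_ImpInt f l : Imp f l -> ImpInt f l.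
Proof.
  intros [Hi Hl]. split.
  - intros b Hb. exists (ex_RInt_Reals_0 _ _ _ (Hi b Hb)). exact I.
  - intros eps He. destruct (lim_p_eps _ _ Hl eps He) as [B HB].
    exists (Rmax 0 (B+1)). split. apply Rmax_l.
    intros b pr Hb. rewrite <- RInt_Reals. apply HB. pose proof (Rmax_r 0 (B+1)). lra.
Qed.

Lemma mono_lim (F : R -> R) K :
  (forall a b, 0 <= a <= b -> F a <= F b) -> (forall b, 0 <= b -> F b <= K) ->
  exists l : R, is_lim F p_infty l /\ (forall b, 0 <= b -> F b <= l).
Proof.
  intros Hm Hb.
  set (E := fun v => exists b, 0 <= b /\ v = F b).
  assert (HE : bound E). { exists K. intros v [b [Hb0 ->]]. apply Hb; auto. }
  assert (Hne : exists v, E v). { exists (F 0). exists 0. split; [lra|reflexivity]. }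
  destruct (completeness E HE Hne) as [l [Hub Hlub]].
  assert (Hup : forall b, 0 <= b -> F b <= l). { intros b Hb0. apply Hub. exists b; auto. }
  exists l. split; auto.
  apply lim_p_eps_inv. intros eps He.
  destruct (classic (exists b0, 0 <= b0 /\ l - eps < F b0)) as [[b0 [Hb0 Hlt]]|Hn].
  - exists b0. intros b Hbb. assert (F b0 <= F b) by (apply Hm; lra).
    assert (F b <= l) by (apply Hup; lra). apply Rabs_def1; lra.
  - exfalso. assert (l <= l - eps); [|lra]. apply Hlub. intros v [b [Hb0 ->]].
    destruct (Rle_or_lt (F b) (l - eps)) as [|Hlt]; auto. exfalso; apply Hn; eauto.
Qed.

Lemma lim_le_const F (l c : R) : is_lim F p_infty l -> (exists B, forall b, B < b -> F b <= c) -> l <= c.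
Proof.
  intros H [B HB]. destruct (Rle_or_lt l c) as [|Hlt]; auto.
  destruct (lim_p_eps _ _ H (l - c) ltac:(lra)) as [B' HB'].
  specialize (HB (Rmax B B' + 1)). specialize (HB' (Rmax B B' + 1)).
  pose proof (Rmax_l B B'). pose proof (Rmax_r B B').
  assert (h1 := HB ltac:(lra)). assert (h2 := HB' ltac:(lra)).
  apply Rabs_def2 in h2. lra.
Qed.

Lemma lim_ge_const F (l c : R) : is_lim F p_infty l -> (exists B, forall b, B < b -> c <= F b) -> c <= l.
Proof.
  intros H [B HB]. destruct (Rle_or_lt c l) as [|Hlt]; auto.
  destruct (lim_p_eps _ _ H (c - l) ltac:(lra)) as [B' HB'].
  specialize (HB (Rmax B B' + 1)). specialize (HB' (Rmax B B' + 1)).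
  pose proof (Rmax_l B B'). pose proof (Rmax_r B B').
  assert (h1 := HB ltac:(lra)). assert (h2 := HB' ltac:(lra)).
  apply Rabs_def2 in h2. lra.
Qed.

Lemma Imp_unique f a b : Imp f a -> Imp f b -> a = b.
Proof.
  intros [_ Ha] [_ Hb]. apply is_lim_unique in Ha. apply is_lim_unique in Hb.
  rewrite Ha in Hb. injection Hb; auto.
Qed.

Lemma Imp_ext f g a : (forall x, 0 <= x -> f x = g x) -> Imp f a -> Imp g a.
Proof.
  intros He [Hi Hl]. split.
  - intros b Hb. apply (ex_RInt_ext f). 2: apply Hi; auto.
    intros x Hx. apply He. rewrite Rmin_left in Hx; lra.
  - apply (is_lim_ext_loc (fun b => RInt f 0 b)). 2: exact Hl.
    exists 0. intros b Hb. apply RInt_ext. intros x Hx. apply He. rewrite Rmin_left in Hx; lra.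
Qed.

Lemma Imp_plus f g a b : Imp f a -> Imp g b -> Imp (fun x => f x + g x) (a + b).
Proof.
  intros [Hfi Hfl] [Hgi Hgl]. split.
  - intros c Hc. apply (ex_RInt_plus f g); auto.
  - apply (is_lim_ext_loc (fun c => RInt f 0 c + RInt g 0 c)).
    + exists 0. intros c Hc. symmetry. apply (RInt_plus f g); apply Hfi || apply Hgi; lra.
    + apply is_lim_plus'; auto.
Qed.

Lemma Imp_scal f a c : Imp f a -> Imp (fun x => c * f x) (c * a).
Proof.
  intros [Hfi Hfl]. split.
  - intros b Hb. apply (ex_RInt_scal f). auto.
  - apply (is_lim_ext_loc (fun b => c * RInt f 0 b)).
    + exists 0. intros b Hb. symmetry. apply (RInt_scal f). apply Hfi; lra.
    + apply (is_lim_scal_l _ c _ a) in Hfl. exact Hfl.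
Qed.

Lemma Imp_zero : Imp (fun _ => 0) 0.
Proof.
  split. intros; apply ex_RInt_const.
  apply (is_lim_ext (fun _ => 0)). intros b. rewrite RInt_const. unfold scal; simpl; unfold mult; simpl; ring.
  apply is_lim_const.
Qed.

Lemma Imp_sum (f : nat -> R -> R) (l : nat -> R) n :
  (forall i, (i <= n)%nat -> Imp (f i) (l i)) ->
  Imp (fun x => sum_f_R0 (fun i => f i x) n) (sum_f_R0 l n).
Proof.
  induction n; intros H; simpl.
  - apply H; lia.
  - apply Imp_plus. apply IHn; intros; apply H; lia. apply H; lia.
Qed.

Lemma RInt_mono_upper g a b : (forall x, 0 <= x -> 0 <= g x) -> (forall c, 0 <= c -> ex_RInt g 0 c) ->
  0 <= a <= b -> RInt g 0 a <= RInt g 0 b.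
Proof.
  intros Hp Hi Hab. rewrite <- (RInt_Chasles g 0 a b).
  - assert (0 <= RInt g a b). { apply RInt_ge_0. lra. apply (ex_RInt_Chasles_2 g 0). lra. apply Hi; lra.
      intros; apply Hp; lra. }
    change (plus (RInt g 0 a) (RInt g a b)) with (RInt g 0 a + RInt g a b). lra.
  - apply Hi; lra.
  - apply (ex_RInt_Chasles_2 g 0). lra. apply Hi; lra.
Qed.

Lemma Imp_bound g L : (forall x, 0 <= x -> 0 <= g x) -> Imp g L ->
  forall b, 0 <= b -> 0 <= RInt g 0 b <= L.
Proof.
  intros Hp [Hi Hl] b Hb. split.
  - apply RInt_ge_0; auto. intros; apply Hp; lra.
  - apply (lim_ge_const _ _ _ Hl). exists b. intros c Hc. apply RInt_mono_upper; auto; lra.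
Qed.

Lemma Imp_dom f g L : (forall b, 0 <= b -> ex_RInt f 0 b) ->
  (forall x, 0 <= x -> 0 <= f x <= g x) -> Imp g L -> exists l, Imp f l /\ 0 <= l <= L.
Proof.
  intros Hfi Hd Hg.
  assert (Hgp : forall x, 0 <= x -> 0 <= g x) by (intros x Hx; specialize (Hd x Hx); lra).
  destruct (mono_lim (fun b => RInt f 0 b) L) as [l [Hl Hub]].
  - intros a b Hab. apply RInt_mono_upper; auto. intros x Hx; apply Hd; auto.
  - intros b Hb. apply Rle_trans with (RInt g 0 b).
    + apply RInt_le; auto. apply Hg; auto. intros x Hx; apply Hd; lra.
    + apply (Imp_bound g L Hgp Hg b Hb).
  - exists l. refine (conj (conj Hfi Hl) _). split.
    + apply Rle_trans with (RInt f 0 0). rewrite RInt_point; right; reflexivity. apply Hub; lra.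
    + apply (lim_le_const _ _ _ Hl). exists 0. intros b Hb.
      apply Rle_trans with (RInt g 0 b).
      * apply RInt_le; try lra; auto. apply Hfi; lra. apply Hg; lra. intros x Hx; apply Hd; lra.
      * apply (Imp_bound g L Hgp Hg b); lra.
Qed.

Lemma ex_der_cont (f : R -> R) x : ex_derive f x -> continuous f x.
Proof. intros H. apply (ex_derive_continuous (K:=R_AbsRing) (V:=R_NormedModule) f x H). Qed.

Lemma exp_small eps : 0 < eps -> exists B, forall t, B < t -> exp (- t) < eps.
Proof.
  intros He. exists (- ln eps). intros t Ht. rewrite <- (exp_ln eps He). apply exp_increasing. lra.
Qed.

Lemma Imp_exp a : 0 < a -> Imp (fun x => exp (- (a * x))) (/ a).
Proof.
  intros Ha.
  assert (HR : forall b, is_RInt (fun x => exp (- (a * x))) 0 b ((1 - exp (- (a * b))) / a)).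
  { intros b.
    assert (H := is_RInt_derive (fun x => - exp (- (a * x)) / a) (fun x => exp (- (a * x))) 0 b).
    replace ((1 - exp (- (a * b))) / a) with (minus (- exp (- (a * b)) / a) (- exp (- (a * 0)) / a)).
    apply H.
    - intros x _. auto_derive; auto. field. lra.
    - intros x _. apply ex_der_cont. auto_derive; auto.
    - unfold minus, plus, opp; simpl. rewrite Rmult_0_r, Ropp_0, exp_0. field. lra. }
  split.
  - intros b _. eexists; apply HR.
  - apply (is_lim_ext (fun b => (1 - exp (- (a * b))) / a)).
    + intros b. symmetry; apply is_RInt_unique, HR.
    + apply lim_p_eps_inv. intros eps He.
      destruct (exp_small (eps * a)) as [B HB]. nra.
      exists (Rmax 0 (B / a)). intros b Hb.
      assert (HB' := HB (a * b)). 
      assert (B < a * b). { pose proof (Rmax_r 0 (B/a)). apply Rmult_lt_reg_r with (/ a). apply Rinv_0_lt_compat; lra.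
        replace (a * b * / a) with b by (field; lra). unfold Rdiv in *. lra. }
      specialize (HB' H). pose proof (exp_pos (- (a * b))).
      replace ((1 - exp (- (a * b))) / a - / a) with (- (exp (- (a * b)) / a)) by (field; lra).
      rewrite Rabs_Ropp, Rabs_right.
      apply Rmult_lt_reg_r with a; auto. replace (exp (- (a * b)) / a * a) with (exp (- (a*b))) by (field; lra). lra.
      apply Rle_ge. apply Rdiv_le_0_compat; lra.
Qed.

Lemma cont_eps (g : R -> R) t :
  (forall eps, 0 < eps -> exists d, 0 < d /\ forall y, Rabs (y - t) < d -> Rabs (g y - g t) < eps) ->
  continuous g t.
Proof.
  intros H. unfold continuous. apply filterlim_locally. intros eps.
  destruct (H eps (cond_pos eps)) as [d [Hd Hy]].
  exists (mkposreal d Hd). intros y Hb. apply Hy. exact Hb.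
Qed.

Lemma c2d_x f x y : continuity_2d_pt f x y -> continuous (fun u => f u y) x.
Proof.
  intros H. apply cont_eps. intros eps He. destruct (H (mkposreal eps He)) as [d Hd].
  exists d. split. apply cond_pos. intros u Hu. apply Hd; auto. rewrite Rminus_diag, Rabs_R0. apply cond_pos.
Qed.

Lemma c2d_swap f x y : continuity_2d_pt f x y -> continuity_2d_pt (fun u v => f v u) y x.
Proof.
  intros H eps. destruct (H eps) as [d Hd]. exists d. intros u v Hu Hv. apply Hd; auto.
Qed.

Lemma c2d_y f x y : continuity_2d_pt f x y -> continuous (fun v => f x v) y.
Proof. intros H. apply (c2d_x (fun u v => f v u)). apply c2d_swap; auto. Qed.

Lemma exRI (f : R -> R) a b : (forall x, continuous f x) -> @ex_RInt R_NormedModule f a b.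
Proof. intros H. apply (ex_RInt_continuous (V:=R_CompleteNormedModule)). intros; apply H. Qed.

Lemma PCeps f a b t : (forall x y, continuity_2d_pt f x y) -> a <= b ->
  forall eps, 0 < eps -> exists d, 0 < d /\ forall y, Rabs (y - t) < d ->
    Rabs (RInt (fun x => f x y) a b - RInt (fun x => f x t) a b) < eps.
Proof.
  intros Hc Hab eps He.
  set (e' := eps / (b - a + 1)).
  assert (He' : 0 < e') by (unfold e'; apply Rdiv_lt_0_compat; lra).
  destruct (uniform_continuity_2d_1d f a b t (fun x _ => Hc x t) (mkposreal e' He')) as [d Hd].
  exists d. split. apply cond_pos. intros y Hy.
  assert (Ei : forall v, ex_RInt (fun x => f x v) a b).
  { intros v. apply exRI. intros x. apply c2d_x. auto. }
  assert (E : RInt (fun x => f x y) a b - RInt (fun x => f x t) a b = RInt (fun x => f x y - f x t) a b).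
  { symmetry. apply (RInt_minus (fun x => f x y) (fun x => f x t)); auto. }
  rewrite E. apply Rle_lt_trans with ((b - a) * e').
  - apply abs_RInt_le_const; auto.
    + apply (ex_RInt_minus (fun x => f x y) (fun x => f x t)); auto.
    + intros x Hx. left. apply (Hd x t x y); auto.
      * pose proof (cond_pos d). lra.
      * apply Rabs_def2 in Hy. lra.
      * rewrite Rminus_diag, Rabs_R0. apply cond_pos.
  - unfold e'. apply Rmult_lt_reg_r with (b - a + 1). lra.
    replace ((b - a) * (eps / (b - a + 1)) * (b - a + 1)) with ((b - a) * eps) by (field; lra). nra.
Qed.

Lemma param_cont f a b t : (forall x y, continuity_2d_pt f x y) ->
  continuous (fun y => RInt (fun x => f x y) a b) t.
Proof.
  intros Hc. apply cont_eps. intros eps He.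
  destruct (Rle_or_lt a b) as [Hab|Hab].
  - apply PCeps; auto.
  - destruct (PCeps f b a t Hc ltac:(lra) eps He) as [d [Hd H]]. exists d. split; auto.
    intros y Hy. specialize (H y Hy).
    assert (Ei : forall v, ex_RInt (fun x => f x v) b a).
    { intros v. apply exRI. intros x. apply c2d_x. auto. }
    rewrite <- (opp_RInt_swap (fun x => f x y)), <- (opp_RInt_swap (fun x => f x t)); auto.
    unfold opp; simpl. replace (- RInt (fun x : R => f x y) b a - - RInt (fun x : R => f x t) b a)
      with (- (RInt (fun x : R => f x y) b a - RInt (fun x : R => f x t) b a)) by ring.
    rewrite Rabs_Ropp. auto.
Qed.

Lemma fubini_fin f A T : (forall x y, continuity_2d_pt f x y) ->
  RInt (fun y => RInt (fun x => f x y) 0 A) 0 T = RInt (fun x => RInt (fun y => f x y) 0 T) 0 A.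
Proof.
  intros Hc.
  set (Psi := fun t => RInt (fun x => RInt (fun y => f x y) 0 t) 0 A).
  assert (Hdy : forall x t, is_derive (fun u => RInt (fun y => f x y) 0 u) t (f x t)).
  { intros x t. apply (is_derive_RInt (fun y => f x y) (RInt (fun y => f x y) 0) 0 t).
    apply filter_forall. intros b. apply (RInt_correct (V:=R_CompleteNormedModule)). apply exRI. intros; apply c2d_y; auto.
    apply c2d_y; auto. }
  assert (Hder : forall t, is_derive Psi t (RInt (fun x => f x t) 0 A)).
  { intros t. unfold Psi.
    assert (H := is_derive_RInt_param (fun t x => RInt (fun y => f x y) 0 t) 0 A t).
    replace (RInt (fun x => f x t) 0 A) with
      (RInt (fun x => Derive (fun u => RInt (fun y => f x y) 0 u) t) 0 A).
    apply H.
    - apply filter_forall. intros t0 x _. eexists; apply Hdy.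
    - intros x _. apply (continuity_2d_pt_ext (fun u v => f v u)).
      intros u v. symmetry. apply is_derive_unique, Hdy.
      apply c2d_swap; auto.
    - apply filter_forall. intros t0. apply exRI. intros x.
      apply (param_cont (fun u v => f v u)). intros; apply c2d_swap; auto.
    - apply RInt_ext. intros x _. apply is_derive_unique, Hdy. }
  assert (HD : forall t, Derive Psi t = RInt (fun x => f x t) 0 A).
  { intros t; apply is_derive_unique, Hder. }
  assert (E := RInt_Derive Psi 0 T).
  rewrite (RInt_ext (Derive Psi) (fun t => RInt (fun x => f x t) 0 A)) in E by (intros; apply HD).
  rewrite E.
  - unfold Psi. rewrite (RInt_ext (fun x => RInt (fun y => f x y) 0 0) (fun _ => 0)).
    rewrite RInt_const. unfold scal; simpl; unfold mult; simpl. ring.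
    intros x _. apply (RInt_point (V:=R_CompleteNormedModule)).
  - intros x _. eexists; apply Hder.
  - intros x _. apply (continuous_ext (fun t => RInt (fun x => f x t) 0 A)).
    intros; symmetry; apply HD. apply param_cont; auto.
Qed.

Lemma RInt_diff (g : R -> R) b c : ex_RInt g 0 c -> 0 <= b <= c ->
  RInt g b c = RInt g 0 c - RInt g 0 b.
Proof.
  intros Hi Hb.
  assert (H : plus (RInt g 0 b) (RInt g b c) = RInt g 0 c).
  { apply (RInt_Chasles (V:=R_CompleteNormedModule) g 0 b c).
    apply (ex_RInt_Chasles_1 g 0 b c); auto; lra.
    apply (ex_RInt_Chasles_2 g 0 b c); auto; lra. }
  change (RInt g 0 b + RInt g b c = RInt g 0 c) in H. lra.
Qed.

Lemma tail_gen (g w : R -> R) c L Wt :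
  (forall b, 0 <= b -> ex_RInt g 0 b) -> (forall b, 0 <= b -> ex_RInt w 0 b) ->
  (forall x, 0 <= x -> 0 <= g x <= c * w x) -> 0 <= c -> (forall x, 0 <= x -> 0 <= w x) -> Imp g L -> Imp w Wt ->
  forall b, 0 <= b -> 0 <= L - RInt g 0 b <= c * (Wt - RInt w 0 b).
Proof.
  intros Hgi Hwi Hd Hc Hwp0 [_ Hg] Hw b Hb.
  assert (Hgp : forall x, 0 <= x -> 0 <= g x) by (intros x Hx; specialize (Hd x Hx); lra).
  assert (Hwp : forall x, 0 <= x -> 0 <= c * w x) by (intros x Hx; specialize (Hd x Hx); lra).
  split.
  - assert (RInt g 0 b <= L); [|lra].
    apply (lim_ge_const _ _ _ Hg). exists b. intros c' Hc'. apply RInt_mono_upper; auto; lra.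
  - assert (L <= RInt g 0 b + c * (Wt - RInt w 0 b)); [|lra].
    apply (lim_le_const _ _ _ Hg). exists b. intros c' Hc'.
    assert (E1 := RInt_diff g b c' (Hgi c' ltac:(lra)) ltac:(lra)).
    assert (E2 := RInt_diff w b c' (Hwi c' ltac:(lra)) ltac:(lra)).
    assert (Hle : RInt g b c' <= RInt (fun x => c * w x) b c').
    { apply RInt_le. lra. apply (ex_RInt_Chasles_2 g 0). lra. apply Hgi; lra.
      apply (ex_RInt_scal w). apply (ex_RInt_Chasles_2 w 0). lra. apply Hwi; lra.
      intros x Hx; apply Hd; lra. }
    rewrite (RInt_scal (V:=R_CompleteNormedModule) w) in Hle.
    2: { apply (ex_RInt_Chasles_2 w 0). lra. apply Hwi; lra. }
    unfold scal in Hle; simpl in Hle; unfold mult in Hle; simpl in Hle.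
    assert (RInt w 0 c' <= Wt).
    { apply (Imp_bound w Wt Hwp0 Hw c'). lra. }
    assert (0 <= c * (Wt - RInt w 0 c')) by (apply Rmult_le_pos; lra).
    nra.
Qed.

Definition LimR (F : R -> R) : R := real (Lim F p_infty).

Lemma LimR_eq F (l : R) : is_lim F p_infty l -> LimR F = l.
Proof. intros H. unfold LimR. rewrite (is_lim_unique _ _ _ H). reflexivity. Qed.

Section FubiniInf.
Variables (f : R -> R -> R) (D E h : R -> R) (Dt Et Emax dl : R).
Hypothesis Hc : forall x y, continuity_2d_pt f x y.
Hypothesis Hdl : 0 < dl.
Hypothesis HDc : forall x, continuous D x.
Hypothesis HEc : forall y, continuous E y.
Hypothesis HDp : forall x, 0 <= x -> 0 <= D x.
Hypothesis HEp : forall y, -dl <= y -> 0 <= E y <= Emax.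
Hypothesis HD : Imp D Dt.
Hypothesis HE : Imp E Et.
Hypothesis Hf : forall x y, 0 <= x -> -dl <= y -> 0 <= f x y <= D x * E y.
Hypothesis Hh : forall x, 0 <= x -> Imp (fun y => f x y) (h x).
Hypothesis Hhi : forall b, 0 <= b -> ex_RInt h 0 b.

Let G := fun y => LimR (fun b => RInt (fun x => f x y) 0 b).

Lemma fi_x y b : ex_RInt (fun x => f x y) 0 b.
Proof. apply exRI. intros; apply c2d_x; auto. Qed.
Lemma fi_y x b : ex_RInt (fun y => f x y) 0 b.
Proof. apply exRI. intros; apply c2d_y; auto. Qed.
Lemma Di b : ex_RInt D 0 b.
Proof. apply exRI; auto. Qed.
Lemma Ei b : ex_RInt E 0 b.
Proof. apply exRI; auto. Qed.

Lemma inner y : -dl <= y -> Imp (fun x => f x y) (G y) /\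
  forall b, 0 <= b -> 0 <= G y - RInt (fun x => f x y) 0 b <= E y * (Dt - RInt D 0 b).
Proof.
  intros Hy.
  assert (HS : Imp (fun x => E y * D x) (E y * Dt)) by (apply Imp_scal; auto).
  destruct (Imp_dom (fun x => f x y) (fun x => E y * D x) (E y * Dt)) as [l [Hl _]]; auto.
  - intros; apply fi_x.
  - intros x Hx. specialize (Hf x y Hx Hy). rewrite Rmult_comm. auto.
  - assert (HG : G y = l). { unfold G. apply LimR_eq. apply Hl. }
    rewrite HG. split; auto.
    apply (tail_gen (fun x => f x y) D (E y) l Dt); auto.
    + intros; apply fi_x.
    + intros; apply Di.
    + intros x Hx. specialize (Hf x y Hx Hy). rewrite Rmult_comm. auto.
    + apply HEp; auto.
Qed.

Lemma hx_tail x : 0 <= x -> forall b, 0 <= b ->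
  0 <= h x - RInt (fun y => f x y) 0 b <= D x * (Et - RInt E 0 b).
Proof.
  intros Hx. apply (tail_gen (fun y => f x y) E (D x) (h x) Et); auto.
  - intros; apply fi_y.
  - intros; apply Ei.
  - intros y Hy. apply Hf; lra.
  - intros y Hy. apply HEp; lra.
Qed.

Lemma Dt_nn : 0 <= Dt.
Proof. destruct (Imp_bound D Dt HDp HD 0) as [H1 H2]; lra. Qed.
Lemma Et_nn : 0 <= Et.
Proof. destruct (Imp_bound E Et (fun y Hy => proj1 (HEp y ltac:(lra))) HE 0) as [H1 H2]; lra. Qed.
Lemma Emax_nn : 0 <= Emax.
Proof. destruct (HEp 0); lra. Qed.

Lemma G_cont y0 : -dl < y0 -> continuous G y0.
Proof.
  intros Hy0. apply cont_eps. intros eps He.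
  destruct (lim_p_eps _ _ (proj2 HD) (eps / (3 * (Emax + 1)))) as [B HB].
  { pose proof Emax_nn. apply Rdiv_lt_0_compat; lra. }
  set (A := Rmax 0 B + 1).
  assert (HA0 : 0 <= A) by (unfold A; pose proof (Rmax_l 0 B); lra).
  assert (HtA : 0 <= Dt - RInt D 0 A <= eps / (3 * (Emax + 1))).
  { split. destruct (Imp_bound D Dt HDp HD A HA0); lra.
    assert (h1 := HB A ltac:(unfold A; pose proof (Rmax_r 0 B); lra)). apply Rabs_def2 in h1. lra. }
  assert (Htail : forall y, -dl <= y -> Rabs (G y - RInt (fun x => f x y) 0 A) < eps / 3).
  { intros y Hy. destruct (inner y Hy) as [_ Ht]. specialize (Ht A HA0).
    destruct (HEp y Hy). pose proof Emax_nn.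
    assert (E y * (Dt - RInt D 0 A) <= Emax * (eps / (3 * (Emax + 1)))).
    { apply Rmult_le_compat; lra. }
    assert (Emax * (eps / (3 * (Emax + 1))) < eps / 3).
    { apply Rmult_lt_reg_r with (3 * (Emax + 1)). lra.
      replace (Emax * (eps / (3 * (Emax + 1))) * (3 * (Emax + 1))) with (Emax * eps) by (field; lra).
      replace (eps / 3 * (3 * (Emax + 1))) with (Emax * eps + eps) by field. lra. }
    rewrite Rabs_pos_eq; lra. }
  destruct (PCeps f 0 A y0 Hc HA0 (eps / 3) ltac:(lra)) as [d [Hd Hdd]].
  exists (Rmin d (y0 + dl)). split. apply Rmin_glb_lt; lra.
  intros y Hy. pose proof (Rmin_l d (y0 + dl)). pose proof (Rmin_r d (y0 + dl)).
  assert (Hyy : -dl <= y) by (apply Rabs_def2 in Hy; lra).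
  specialize (Hdd y ltac:(lra)).
  assert (h1 := Htail y Hyy). assert (h2 := Htail y0 ltac:(lra)).
  apply Rabs_def2 in h1. apply Rabs_def2 in h2. apply Rabs_def2 in Hdd. apply Rabs_def1; lra.
Qed.

Lemma G_int T : 0 <= T -> ex_RInt G 0 T.
Proof.
  intros HT. apply (ex_RInt_continuous (V:=R_CompleteNormedModule)). intros z Hz.
  rewrite Rmin_left, Rmax_right in Hz by lra. apply G_cont. lra.
Qed.

Lemma fubini_inf : (forall y, -dl <= y -> Imp (fun x => f x y) (G y)) /\
  exists H, Imp h H /\ Imp G H.
Proof.
  split. { intros y Hy. apply (inner y Hy). }
  assert (Hhb : forall x, 0 <= x -> 0 <= h x <= Et * D x).
  { intros x Hx. destruct (hx_tail x Hx 0 ltac:(lra)) as [H1 H2].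
    rewrite !RInt_point in *. change (zero : R) with 0 in *. rewrite Rmult_comm. lra. }
  destruct (Imp_dom h (fun x => Et * D x) (Et * Dt)) as [H [HH _]]; auto.
  { apply Imp_scal; auto. }
  exists H. split; auto.
  split. { intros; apply G_int; auto. }
  assert (Key : forall T, 0 <= T -> H - Dt * (Et - RInt E 0 T) <= RInt G 0 T <= H).
  { intros T HT.
    set (X := RInt G 0 T).
    set (GA := fun A y => RInt (fun x => f x y) 0 A).
    set (hT := fun x => RInt (fun y => f x y) 0 T).
    assert (GAi : forall A, ex_RInt (GA A) 0 T).
    { intros A. apply exRI. intros; apply param_cont; auto. }
    assert (hTi : forall A, ex_RInt hT 0 A).
    { intros A. apply exRI. intros. apply (param_cont (fun u v => f v u)). intros; apply c2d_swap; auto. }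
    assert (Hup : forall A, 0 <= A -> X - Et * (Dt - RInt D 0 A) <= H /\ RInt h 0 A - Dt * (Et - RInt E 0 T) <= X).
    { intros A HA.
      assert (Fu : RInt (GA A) 0 T = RInt hT 0 A) by (apply fubini_fin; auto).
      assert (Hsplit : X = RInt (GA A) 0 T + RInt (fun y => G y - GA A y) 0 T).
      { assert (Hm := RInt_minus (V:=R_CompleteNormedModule) G (GA A) 0 T (G_int T HT) (GAi A)).
        change (RInt (fun y => G y - GA A y) 0 T = RInt G 0 T - RInt (GA A) 0 T) in Hm.
        unfold X. lra. }
      assert (Hdiff : 0 <= RInt (fun y => G y - GA A y) 0 T <= Et * (Dt - RInt D 0 A)).
      { assert (Hi : ex_RInt (fun y => G y - GA A y) 0 T)
          by (apply (ex_RInt_minus (V:=R_NormedModule) G (GA A)); [apply G_int; auto | apply GAi]).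
        split.
        - apply RInt_ge_0; auto. intros y Hy. destruct (inner y ltac:(lra)) as [_ Ht].
          specialize (Ht A HA). unfold GA. lra.
        - apply Rle_trans with (RInt (fun y => (Dt - RInt D 0 A) * E y) 0 T).
          + apply RInt_le; auto. apply (ex_RInt_scal (V:=R_NormedModule) E). apply Ei.
            intros y Hy. destruct (inner y ltac:(lra)) as [_ Ht].
            specialize (Ht A HA). unfold GA. rewrite Rmult_comm. lra.
          + rewrite (RInt_scal (V:=R_CompleteNormedModule) E) by apply Ei.
            unfold scal; simpl; unfold mult; simpl.
            destruct (Imp_bound E Et (fun y Hy => proj1 (HEp y ltac:(lra))) HE T HT).
            destruct (Imp_bound D Dt HDp HD A HA).
            rewrite (Rmult_comm Et). apply Rmult_le_compat_l; lra. }
      assert (HhT : RInt h 0 A - Dt * (Et - RInt E 0 T) <= RInt hT 0 A <= RInt h 0 A).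
      { destruct (Imp_bound E Et (fun y Hy => proj1 (HEp y ltac:(lra))) HE T HT) as [_ HET].
        split.
        - apply Rle_trans with (RInt (fun x => h x - (Et - RInt E 0 T) * D x) 0 A).
          + rewrite (RInt_minus (V:=R_CompleteNormedModule) h) by (auto; apply (ex_RInt_scal (V:=R_NormedModule) D); apply Di).
            rewrite (RInt_scal (V:=R_CompleteNormedModule) D) by apply Di.
            unfold minus, plus, opp, scal; simpl; unfold mult; simpl.
            destruct (Imp_bound D Dt HDp HD A HA).
            assert ((Et - RInt E 0 T) * RInt D 0 A <= (Et - RInt E 0 T) * Dt) by (apply Rmult_le_compat_l; lra).
            lra.
          + apply RInt_le; auto.
            apply (ex_RInt_minus (V:=R_NormedModule) h); auto. apply (ex_RInt_scal (V:=R_NormedModule) D); apply Di.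
            intros x Hx. destruct (hx_tail x ltac:(lra) T HT). unfold hT. lra.
        - apply RInt_le; auto. intros x Hx. destruct (hx_tail x ltac:(lra) T HT). unfold hT. lra. }
      destruct (Imp_bound h H (fun x Hx => proj1 (Hhb x Hx)) HH A HA).
      lra. }
    split.
    - assert (H <= X + Dt * (Et - RInt E 0 T)); [|lra].
      apply (lim_le_const (fun A => RInt h 0 A) H (X + Dt * (Et - RInt E 0 T)) (proj2 HH)).
      exists 0. intros A HA. destruct (Hup A ltac:(lra)). lra.
    - apply (lim_le_const (fun A => X - Et * (Dt - RInt D 0 A)) X H).
      + apply lim_p_eps_inv. intros eps He. pose proof Et_nn.
        destruct (lim_p_eps _ _ (proj2 HD) (eps / (Et + 1))) as [B HB].
        { apply Rdiv_lt_0_compat; lra. }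
        exists B. intros b Hb. specialize (HB b Hb).
        replace (X - Et * (Dt - RInt D 0 b) - X) with (Et * (RInt D 0 b - Dt)) by ring.
        rewrite Rabs_mult, Rabs_pos_eq by lra.
        apply Rle_lt_trans with (Et * (eps / (Et + 1))). apply Rmult_le_compat_l; lra.
        apply Rmult_lt_reg_r with (Et + 1). lra.
        replace (Et * (eps / (Et + 1)) * (Et + 1)) with (Et * eps) by (field; lra). nra.
      + exists 0. intros A HA. apply (Hup A); lra. }
  apply lim_p_eps_inv. intros eps He. pose proof Dt_nn.
  destruct (lim_p_eps _ _ (proj2 HE) (eps / (Dt + 1))) as [B HB].
  { apply Rdiv_lt_0_compat; lra. }
  exists (Rmax 0 B). intros T HT. pose proof (Rmax_l 0 B). pose proof (Rmax_r 0 B).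
  specialize (HB T ltac:(lra)). destruct (Key T ltac:(lra)).
  apply Rabs_def2 in HB.
  assert (Dt * (Et - RInt E 0 T) < eps).
  { apply Rle_lt_trans with (Dt * (eps / (Dt + 1))). apply Rmult_le_compat_l; lra.
    apply Rmult_lt_reg_r with (Dt + 1). lra.
    replace (Dt * (eps / (Dt + 1)) * (Dt + 1)) with (Dt * eps) by (field; lra). nra. }
  apply Rabs_def1; lra.
Qed.
End FubiniInf.

Lemma pow_fact_le_exp t n : 0 <= t -> t ^ n / INR (fact n) <= exp t.
Proof.
  intros Ht. apply Rle_trans with (sum_f_R0 (fun k => t ^ k / INR (fact k)) n).
  - destruct n. simpl. lra.
    simpl sum_f_R0 at 1. 
    assert (0 <= sum_f_R0 (fun k => t ^ k / INR (fact k)) n).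
    { apply cond_pos_sum. intros k. apply Rdiv_le_0_compat. apply pow_le; auto. apply INR_fact_lt_0. }
    change (t ^ S n / INR (fact (S n)) <= sum_f_R0 (fun k => t ^ k / INR (fact k)) n + t ^ S n / INR (fact (S n))). lra.
  - apply exp_ge_taylor; auto.
Qed.

Lemma lim_cexp C b : 0 < b -> is_lim (fun T => C * exp (- (b * T))) p_infty 0.
Proof.
  intros Hb. apply lim_p_eps_inv. intros eps He.
  destruct (exp_small (eps / (Rabs C + 1))) as [B HB]. apply Rdiv_lt_0_compat; auto. pose proof (Rabs_pos C); lra.
  exists (B / b). intros T HT. rewrite Rminus_0_r, Rabs_mult, (Rabs_pos_eq (exp _)) by (left; apply exp_pos).
  assert (B < b * T). { apply Rmult_lt_reg_r with (/ b). apply Rinv_0_lt_compat; auto.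
    replace (b * T * / b) with T by (field; lra). exact HT. }
  specialize (HB _ H). pose proof (Rabs_pos C).
  apply Rle_lt_trans with (Rabs C * (eps / (Rabs C + 1))). apply Rmult_le_compat_l; lra.
  apply Rmult_lt_reg_r with (Rabs C + 1). lra.
  replace (Rabs C * (eps / (Rabs C + 1)) * (Rabs C + 1)) with (Rabs C * eps) by (field; lra). nra.
Qed.

Lemma polyexp_bound n b T : 0 < b -> 0 <= T ->
  T ^ n * exp (- (b * T)) <= INR (fact n) * (2 / b) ^ n * exp (- (b / 2 * T)).
Proof.
  intros Hb HT. assert (H := pow_fact_le_exp (b / 2 * T) n ltac:(apply Rmult_le_pos; lra)).
  rewrite Rpow_mult_distr in H.
  assert (Hf := INR_fact_lt_0 n).
  assert (Hp : 0 < (b / 2) ^ n) by (apply pow_lt; lra).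
  assert (E1 : T ^ n <= INR (fact n) * (2 / b) ^ n * exp (b / 2 * T)).
  { apply Rmult_le_compat_r with (r := INR (fact n)) in H; [|lra].
    replace ((b / 2) ^ n * T ^ n / INR (fact n) * INR (fact n)) with ((b / 2) ^ n * T ^ n) in H by (field; lra).
    replace (T ^ n) with ((2 / b) ^ n * ((b / 2) ^ n * T ^ n)).
    2: { rewrite <- Rmult_assoc, <- Rpow_mult_distr. replace (2 / b * (b / 2)) with 1 by (field; lra).
         rewrite pow1; ring. }
    assert (0 < (2 / b) ^ n) by (apply pow_lt; apply Rdiv_lt_0_compat; lra). nra. }
  replace (exp (- (b / 2 * T))) with (exp (b / 2 * T) * exp (- (b * T))).
  2: { rewrite <- exp_plus. f_equal. field. }
  pose proof (exp_pos (- (b * T))). nra.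
Qed.

Lemma lim_polyexp n b : 0 < b -> is_lim (fun T => T ^ n * exp (- (b * T))) p_infty 0.
Proof.
  intros Hb. apply (is_lim_le_le_loc (fun _ => 0) (fun T => INR (fact n) * (2 / b) ^ n * exp (- (b / 2 * T)))).
  - exists 0. intros T HT. split. apply Rmult_le_pos. apply pow_le; lra. left; apply exp_pos.
    apply polyexp_bound; lra.
  - apply is_lim_const.
  - apply lim_cexp. lra.
Qed.

Lemma lim_sum (F : nat -> R -> R) n : (forall i, (i <= n)%nat -> is_lim (F i) p_infty 0) ->
  is_lim (fun T => sum_f_R0 (fun i => F i T) n) p_infty 0.
Proof.
  induction n; intros H; simpl.
  - apply H; lia.
  - replace (Finite 0) with (Finite (0 + 0)) by (f_equal; ring). apply is_lim_plus'.
    apply IHn; intros; apply H; lia. apply H; lia.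
Qed.

Lemma lim_polyexp_shift n lam g2 : 0 < lam -> 0 < g2 ->
  is_lim (fun T => exp (- (lam * T)) * (1 + g2 * T) ^ n) p_infty 0.
Proof.
  intros Hl Hg.
  apply (is_lim_le_le_loc (fun _ => 0) (fun T => (2 * g2) ^ n * (T ^ n * exp (- (lam * T))))).
  - exists (/ g2). intros T HT. assert (0 < T). { pose proof (Rinv_0_lt_compat g2 Hg). lra. }
    split. apply Rmult_le_pos. left; apply exp_pos. apply pow_le. nra.
    assert (1 + g2 * T <= 2 * g2 * T).
    { assert (1 < g2 * T). { apply Rmult_lt_reg_r with (/ g2). apply Rinv_0_lt_compat; auto.
        replace (g2 * T * / g2) with T by (field; lra). lra. } lra. }
    assert ((1 + g2 * T) ^ n <= (2 * g2 * T) ^ n) by (apply pow_incr; nra).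
    rewrite Rpow_mult_distr in H1. pose proof (exp_pos (- (lam * T))). nra.
  - apply is_lim_const.
  - replace (Finite 0) with (Finite ((2 * g2) ^ n * 0)) by (f_equal; ring).
    apply is_lim_scal_l with (a := (2 * g2) ^ n) (l := Finite 0). apply lim_polyexp; auto.
Qed.

Definition Sf (N : nat) (z : R) : R := sum_f_R0 (fun i => exp (- z) * z ^ i / INR (fact i)) N.

Lemma Sf_der N z : is_derive (Sf N) z (- (exp (- z) * z ^ N / INR (fact N))).
Proof.
  induction N.
  - unfold Sf; simpl. auto_derive; auto. field.
  - unfold Sf. simpl sum_f_R0.
    apply (is_derive_ext (fun z => Sf N z + exp (- z) * z ^ S N / INR (fact (S N)))).
    { intros t; reflexivity. }
    evar (d : R).
    replace (- (exp (- z) * z ^ S N / INR (fact (S N)))) with ((- (exp (- z) * z ^ N / INR (fact N))) + d).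
    apply (is_derive_plus (K:=R_AbsRing) (V:=R_NormedModule)). exact IHN.
    unfold d. auto_derive. auto. reflexivity.
    unfold d. rewrite fact_simpl, mult_INR.
    assert (INR (fact N) <> 0) by apply INR_fact_neq_0. assert (INR (S N) <> 0) by (apply not_0_INR; lia).
    assert (Hm : match N with 0%nat => 1 | S _ => INR N + 1 end = INR (S N)) by (destruct N; reflexivity).
    rewrite Hm.
    replace (INR (fact N + N * fact N)) with (INR (S N) * INR (fact N)) by (rewrite <- mult_INR; reflexivity).
    simpl pow. field. split; auto.
Qed.

Fixpoint Pp (lam g2 : R) (i : nat) (u : R) : R :=
  match i with
  | O => / lam
  | S j => u ^ S j / lam + INR (S j) * g2 / lam * Pp lam g2 j u
  end.

Lemma Pp_S lam g2 i u : Pp lam g2 (S i) u = u ^ S i / lam + INR (S i) * g2 / lam * Pp lam g2 i u.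
Proof. reflexivity. Qed.

Lemma Fp_der lam g2 i y : lam <> 0 ->
  is_derive (fun y => - exp (- (lam * y)) * Pp lam g2 i (1 + g2 * y)) y (exp (- (lam * y)) * (1 + g2 * y) ^ i).
Proof.
  intros Hl. revert y. induction i; intros y.
  - simpl. auto_derive; auto. field. auto.
  - apply (is_derive_ext (fun y => (- exp (- (lam * y)) * (1 + g2 * y) ^ S i / lam)
       + INR (S i) * g2 / lam * (- exp (- (lam * y)) * Pp lam g2 i (1 + g2 * y)))).
    { intros t. cbv beta. rewrite Pp_S. match goal with |- ?a = ?b => change (@eq R a b) end. field. auto. }
    evar (d : R).
    replace (exp (- (lam * y)) * (1 + g2 * y) ^ S i) with
      (d + INR (S i) * g2 / lam * (exp (- (lam * y)) * (1 + g2 * y) ^ i)).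
    apply (is_derive_plus (K:=R_AbsRing) (V:=R_NormedModule)).
    unfold d. auto_derive. auto. reflexivity.
    apply is_derive_scal. apply IHi.
    unfold d.
    assert (Hm : match i with 0%nat => 1 | S _ => INR i + 1 end = INR (S i)) by (destruct i; reflexivity).
    rewrite ?Hm. simpl pow. field. auto.
Qed.

Lemma Fp_lim lam g2 i : 0 < lam -> 0 < g2 ->
  is_lim (fun T => exp (- (lam * T)) * Pp lam g2 i (1 + g2 * T)) p_infty 0.
Proof.
  intros Hl Hg. induction i.
  - simpl. apply (is_lim_ext (fun T => / lam * exp (- (lam * T)))). intros; ring.
    apply lim_cexp; auto.
  - apply (is_lim_ext (fun T => / lam * (exp (- (lam * T)) * (1 + g2 * T) ^ S i)
       + INR (S i) * g2 / lam * (exp (- (lam * T)) * Pp lam g2 i (1 + g2 * T)))).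
    { intros T. rewrite Pp_S. field. lra. }
    replace (Finite 0) with (Finite (/ lam * 0 + INR (S i) * g2 / lam * 0)) by (f_equal; ring).
    apply is_lim_plus'.
    + apply (is_lim_scal_l _ (/ lam) _ (Finite 0)). apply lim_polyexp_shift; auto.
    + apply (is_lim_scal_l _ (INR (S i) * g2 / lam) _ (Finite 0)). auto.
Qed.

Lemma Imp_Pp lam g2 i : 0 < lam -> 0 < g2 ->
  Imp (fun y => exp (- (lam * y)) * (1 + g2 * y) ^ i) (Pp lam g2 i 1).
Proof.
  intros Hl Hg.
  set (F := fun y => - exp (- (lam * y)) * Pp lam g2 i (1 + g2 * y)).
  assert (HR : forall b, is_RInt (fun y => exp (- (lam * y)) * (1 + g2 * y) ^ i) 0 b (F b - F 0)).
  { intros b. apply (is_RInt_derive (V:=R_CompleteNormedModule) F).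
    - intros x _. apply Fp_der. lra.
    - intros x _. apply ex_der_cont. auto_derive. auto. }
  assert (HF0 : F 0 = - Pp lam g2 i 1).
  { unfold F. replace (1 + g2 * 0) with 1 by ring. rewrite Rmult_0_r, Ropp_0, exp_0. ring. }
  split.
  - intros b _. eexists; apply HR.
  - apply (is_lim_ext (fun b => Pp lam g2 i 1 - exp (- (lam * b)) * Pp lam g2 i (1 + g2 * b))).
    { intros b. rewrite (is_RInt_unique _ _ _ _ (HR b)). rewrite HF0. unfold F. ring. }
    replace (Finite (Pp lam g2 i 1)) with (Finite (Pp lam g2 i 1 - 0)) by (f_equal; ring).
    apply is_lim_minus'. apply is_lim_const. apply Fp_lim; auto.
Qed.

Lemma Pp_closed lam g2 i : lam <> 0 ->
  Pp lam g2 i 1 = sum_f_R0 (fun j => INR (fact i) / INR (fact (i - j)) * g2 ^ j / lam ^ (j + 1)) i.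
Proof.
  intros Hl. induction i.
  - simpl. field. auto.
  - rewrite Pp_S, IHi. rewrite (decomp_sum _ (S i)) by lia.
    simpl pred. rewrite scal_sum.
    replace (1 ^ S i / lam) with (INR (fact (S i)) / INR (fact (S i - 0)) * g2 ^ 0 / lam ^ (0 + 1)).
    2: { rewrite Nat.sub_0_r, pow1, pow_O. replace (lam ^ (0+1)) with lam by (simpl; ring).
         field. repeat split; auto; apply INR_fact_neq_0. }
    f_equal. apply sum_eq. intros j Hj.
    replace (S i - S j)%nat with (i - j)%nat by lia.
    rewrite fact_simpl, mult_INR. 
    assert (INR (fact (i - j)) <> 0) by apply INR_fact_neq_0.
    assert (lam ^ (j + 1) <> 0) by (apply pow_nonzero; auto).
    replace (S j + 1)%nat with (S (j + 1)) by lia. simpl pow. field. auto.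
Qed.

Definition kf (g1 g2 : R) (N : nat) (x y : R) : R :=
  exp (- y) * Sf N (x * (1 + g2 * y) / g1) / (1 + Rabs x).

Lemma Sf_cont N z : continuity_pt (Sf N) z.
Proof. apply continuity_pt_filterlim. apply ex_der_cont. eexists; apply Sf_der. Qed.

Lemma kf_cont g1 g2 N x y : continuity_2d_pt (kf g1 g2 N) x y.
Proof.
  unfold kf, Rdiv.
  apply (continuity_2d_pt_mult (fun u v => exp (- v) * Sf N (u * (1 + g2 * v) * / g1)) (fun u v => / (1 + Rabs u))).
  - apply (continuity_2d_pt_mult (fun u v => exp (- v)) (fun u v => Sf N (u * (1 + g2 * v) * / g1))).
    + apply (continuity_1d_2d_pt_comp exp (fun u v => - v)).
      apply derivable_continuous_pt, derivable_pt_exp.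
      apply (continuity_2d_pt_opp (fun u v => v)). apply continuity_2d_pt_id2.
    + apply (continuity_1d_2d_pt_comp (Sf N) (fun u v => u * (1 + g2 * v) * / g1)).
      apply Sf_cont.
      apply (continuity_2d_pt_mult (fun u v => u * (1 + g2 * v)) (fun u v => / g1)).
      apply (continuity_2d_pt_mult (fun u v => u) (fun u v => 1 + g2 * v)).
      apply continuity_2d_pt_id1.
      apply (continuity_2d_pt_plus (fun u v => 1) (fun u v => g2 * v)). apply continuity_2d_pt_const.
      apply (continuity_2d_pt_mult (fun u v => g2) (fun u v => v)). apply continuity_2d_pt_const.
      apply continuity_2d_pt_id2. apply continuity_2d_pt_const.
  - apply (continuity_2d_pt_inv (fun u v => 1 + Rabs u)).
    apply (continuity_2d_pt_plus (fun u v => 1) (fun u v => Rabs u)). apply continuity_2d_pt_const.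
    apply (continuity_1d_2d_pt_comp Rabs (fun u v => u)). apply Rcontinuity_abs. apply continuity_2d_pt_id1.
    pose proof (Rabs_pos x). lra.
Qed.

Lemma term_bound w i : 0 <= w -> exp (- w) * w ^ i / INR (fact i) <= 2 ^ i * exp (- (w / 2)).
Proof.
  intros Hw. assert (H := pow_fact_le_exp (w / 2) i ltac:(lra)).
  assert (Hf := INR_fact_lt_0 i).
  replace (exp (- w) * w ^ i / INR (fact i)) with (2 ^ i * exp (- w) * ((w / 2) ^ i / INR (fact i))).
  2: { assert (Hp : (w/2)^i = w^i / 2^i) by (unfold Rdiv; rewrite Rpow_mult_distr, pow_inv; reflexivity).
       rewrite Hp. field. split. lra. apply pow_nonzero; lra. }
  replace (exp (- (w / 2))) with (exp (- w) * exp (w / 2)) by (rewrite <- exp_plus; f_equal; field).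
  assert (0 < 2 ^ i * exp (- w)) by (apply Rmult_lt_0_compat; [apply pow_lt; lra | apply exp_pos]).
  rewrite <- Rmult_assoc. apply Rmult_le_compat_l; lra.
Qed.

Lemma Sf_bounds N w a : 0 <= a -> a <= w ->
  0 <= Sf N w <= sum_f_R0 (fun i => 2 ^ i) N * exp (- (a / 2)).
Proof.
  intros Ha Hw. unfold Sf. split.
  - apply cond_pos_sum. intros i. apply Rdiv_le_0_compat. apply Rmult_le_pos. left; apply exp_pos.
    apply pow_le; lra. apply INR_fact_lt_0.
  - rewrite Rmult_comm, scal_sum. apply sum_Rle. intros i _.
    apply Rle_trans with (2 ^ i * exp (- (w / 2))). apply term_bound; lra.
    apply Rmult_le_compat_l. apply pow_le; lra.
    assert (exp (- (w / 2)) <= exp (- (a / 2))). { destruct (Req_dec w a). subst; lra. left. apply exp_increasing. lra. }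
    lra.
Qed.

Definition Cd (N : nat) : R := sum_f_R0 (fun i => 2 ^ i) N.

Lemma kf_bounds g1 g2 N x y : 0 < g1 -> 0 < g2 -> 0 <= x -> - / (2 * g2) <= y ->
  0 <= kf g1 g2 N x y <= (Cd N * exp (- (/ (4 * g1) * x))) * exp (- y).
Proof.
  intros H1 H2 Hx Hy. unfold kf.
  assert (Hgy : -1/2 <= g2 * y).
  { apply Rmult_le_compat_l with (r := g2) in Hy; [|lra].
    replace (g2 * - / (2 * g2)) with (-1/2) in Hy by (field; lra). lra. }
  set (w := x * (1 + g2 * y) / g1).
  assert (Ha : x / (2 * g1) <= w).
  { unfold w. apply Rmult_le_reg_r with (2 * g1). lra.
    replace (x / (2 * g1) * (2 * g1)) with x by (field; lra).
    replace (x * (1 + g2 * y) / g1 * (2 * g1)) with (2 * x * (1 + g2 * y)) by (field; lra). nra. }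
  assert (Ha0 : 0 <= x / (2 * g1)) by (apply Rdiv_le_0_compat; lra).
  destruct (Sf_bounds N w (x / (2 * g1)) Ha0 Ha) as [S0 S1].
  replace (x / (2 * g1) / 2) with (/ (4 * g1) * x) in S1 by (field; lra).
  fold (Cd N) in S1.
  rewrite Rabs_pos_eq by lra.
  pose proof (exp_pos (- y)).
  split.
  - apply Rdiv_le_0_compat. apply Rmult_le_pos; lra. lra.
  - apply Rle_trans with (exp (- y) * Sf N w).
    + unfold Rdiv. rewrite <- (Rmult_1_r (exp (- y) * Sf N w)) at 2. apply Rmult_le_compat_l.
      apply Rmult_le_pos; lra. rewrite <- Rinv_1. apply Rinv_le_contravar; lra.
    + rewrite Rmult_comm. apply Rmult_le_compat_r; lra.
Qed.

Definition cc (g1 : R) (i : nat) (x : R) : R := exp (- (x / g1)) * (x / g1) ^ i / INR (fact i) / (1 + x).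

Lemma kf_split g1 g2 N x y : 0 < g1 -> 0 < g2 -> 0 <= x ->
  kf g1 g2 N x y = sum_f_R0 (fun i => cc g1 i x * (exp (- ((1 + g2 * x / g1) * y)) * (1 + g2 * y) ^ i)) N.
Proof.
  intros H1 H2 Hx. unfold kf, Sf. rewrite Rabs_pos_eq by lra.
  replace (exp (- y) * sum_f_R0 (fun i => exp (- (x * (1 + g2 * y) / g1)) * (x * (1 + g2 * y) / g1) ^ i / INR (fact i)) N / (1 + x))
    with ((exp (- y) / (1 + x)) * sum_f_R0 (fun i => exp (- (x * (1 + g2 * y) / g1)) * (x * (1 + g2 * y) / g1) ^ i / INR (fact i)) N)
    by (field; lra).
  rewrite scal_sum. apply sum_eq. intros i _. unfold cc.
  assert (He : exp (- (x * (1 + g2 * y) / g1)) = exp (- (x / g1)) * exp (- ((1 + g2 * x / g1) * y)) / exp (- y)).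
  { rewrite <- exp_plus. unfold Rdiv at 2. rewrite <- exp_Ropp.
    rewrite <- exp_plus. f_equal. field. lra. }
  rewrite He.
  replace (x * (1 + g2 * y) / g1) with ((x / g1) * (1 + g2 * y)) by (field; lra).
  rewrite Rpow_mult_distr.
  assert (INR (fact i) <> 0) by apply INR_fact_neq_0. pose proof (exp_pos (- y)).
  field. repeat split; lra.
Qed.

Lemma kf_y_imp g1 g2 N x : 0 < g1 -> 0 < g2 -> 0 <= x ->
  Imp (fun y => kf g1 g2 N x y) (sum_f_R0 (fun i => cc g1 i x * Pp (1 + g2 * x / g1) g2 i 1) N).
Proof.
  intros H1 H2 Hx.
  assert (Hl : 0 < 1 + g2 * x / g1). { assert (0 <= g2 * x / g1) by (apply Rdiv_le_0_compat; nra). lra. }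
  apply (Imp_ext (fun y => sum_f_R0 (fun i => cc g1 i x * (exp (- ((1 + g2 * x / g1) * y)) * (1 + g2 * y) ^ i)) N)).
  { intros y _. symmetry. apply kf_split; auto. }
  apply (Imp_sum (fun i y => cc g1 i x * (exp (- ((1 + g2 * x / g1) * y)) * (1 + g2 * y) ^ i))
                 (fun i => cc g1 i x * Pp (1 + g2 * x / g1) g2 i 1)).
  intros i _. apply Imp_scal. apply Imp_Pp; auto.
Qed.

Definition coef (g1 g2 : R) (i l : nat) : R :=
  powerRZ g1 (Z.of_nat l + 1 - Z.of_nat i) / (g2 * INR (fact (i - l))).

Definition hfun (g1 g2 : R) (N : nat) (x : R) : R :=
  sum_f_R0 (fun i => sum_f_R0 (fun l => coef g1 g2 i l * I1_integrand (1 / g1) (g1 / g2) i (l + 1) x) i) N.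

Lemma powerRZ_eq g1 l i : 0 < g1 -> powerRZ g1 (Z.of_nat l + 1 - Z.of_nat i) = g1 ^ (l + 1) / g1 ^ i.
Proof.
  intros H. replace (Z.of_nat l + 1 - Z.of_nat i)%Z with (Z.of_nat (l + 1) + - Z.of_nat i)%Z by lia.
  rewrite powerRZ_add by lra. rewrite powerRZ_neg'. rewrite <- !pow_powerRZ. reflexivity.
Qed.

Lemma term_identity g1 g2 i j x : 0 < g1 -> 0 < g2 -> 0 <= x ->
  cc g1 i x * (INR (fact i) / INR (fact (i - j)) * g2 ^ j / (1 + g2 * x / g1) ^ (j + 1))
  = coef g1 g2 i j * I1_integrand (1 / g1) (g1 / g2) i (j + 1) x.
Proof.
  intros H1 H2 Hx. unfold cc, coef, I1_integrand. rewrite powerRZ_eq by auto.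
  replace (1 + g2 * x / g1) with ((x + g1 / g2) * (g2 / g1)) by (field; lra).
  rewrite Rpow_mult_distr.
  assert (Hp : forall a b n, 0 < b -> (a / b) ^ n = a ^ n / b ^ n).
  { intros a b n Hb. unfold Rdiv. rewrite Rpow_mult_distr, pow_inv. reflexivity. }
  rewrite !Hp by lra.
  replace (exp (- (1 / g1 * x))) with (exp (- (x / g1))) by (f_equal; field; lra).
  rewrite pow_add, !pow_1.
  assert (INR (fact i) <> 0) by apply INR_fact_neq_0.
  assert (INR (fact (i - j)) <> 0) by apply INR_fact_neq_0.
  assert (g1 ^ i <> 0) by (apply pow_nonzero; lra).
  assert (g1 ^ j <> 0) by (apply pow_nonzero; lra).
  assert (g2 ^ j <> 0) by (apply pow_nonzero; lra).
  assert (0 < x + g1 / g2) by (assert (0 < g1 / g2) by (apply Rdiv_lt_0_compat; lra); lra).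
  assert ((x + g1 / g2) ^ (j + 1) <> 0) by (apply pow_nonzero; lra).
  repeat rewrite pow_add. rewrite !pow_1. field. repeat split; auto; try lra. all: try nra. all: apply pow_nonzero; lra.
Qed.

Lemma h_eq g1 g2 N x : 0 < g1 -> 0 < g2 -> 0 <= x ->
  sum_f_R0 (fun i => cc g1 i x * Pp (1 + g2 * x / g1) g2 i 1) N = hfun g1 g2 N x.
Proof.
  intros H1 H2 Hx. unfold hfun. apply sum_eq. intros i _.
  assert (Hl : 0 < 1 + g2 * x / g1). { assert (0 <= g2 * x / g1) by (apply Rdiv_le_0_compat; nra). lra. }
  rewrite Pp_closed by lra. rewrite scal_sum. apply sum_eq. intros j Hj.
  rewrite Rmult_comm. apply term_identity; auto.
Qed.

Lemma I1_exists a b m n : 0 < a -> 0 < b -> exists l, Imp (I1_integrand a b m n) l.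
Proof.
  intros Ha Hb.
  set (C := INR (fact m) * (2 / a) ^ m / b ^ n).
  assert (Hbn : 0 < b ^ n) by (apply pow_lt; lra).
  destruct (Imp_dom (I1_integrand a b m n) (fun x => C * exp (- (a / 2 * x))) (C * / (a / 2))) as [l [Hl _]].
  - intros c Hc. apply (ex_RInt_continuous (V:=R_CompleteNormedModule)). intros z Hz.
    rewrite Rmin_left, Rmax_right in Hz by lra.
    unfold I1_integrand. apply ex_der_cont. auto_derive.
    apply Rmult_integral_contrapositive. split. apply pow_nonzero; lra. lra.
  - intros x Hx. unfold I1_integrand.
    assert (Hd : b ^ n <= (x + b) ^ n * (x + 1)).
    { assert (b ^ n <= (x + b) ^ n) by (apply pow_incr; lra).
      assert (0 <= (x + b) ^ n) by (apply pow_le; lra). nra. }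
    assert (Hnum : 0 <= x ^ m * exp (- (a * x))) by (apply Rmult_le_pos; [apply pow_le; lra| left; apply exp_pos]).
    split.
    + apply Rdiv_le_0_compat; auto. lra.
    + apply Rle_trans with (x ^ m * exp (- (a * x)) / b ^ n).
      * unfold Rdiv. apply Rmult_le_compat_l; auto. apply Rinv_le_contravar; lra.
      * unfold C. pose proof (polyexp_bound m a x Ha Hx).
        replace (INR (fact m) * (2 / a) ^ m / b ^ n * exp (- (a / 2 * x)))
          with (INR (fact m) * (2 / a) ^ m * exp (- (a / 2 * x)) / b ^ n) by (field; lra).
        unfold Rdiv. apply Rmult_le_compat_r; auto. left; apply Rinv_0_lt_compat; auto.
  - apply Imp_scal. apply Imp_exp. lra.
  - exists l; auto.
Qed.

Definition Ivalf (g1 g2 : R) (i l : nat) : R :=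
  LimR (fun b => RInt (I1_integrand (1 / g1) (g1 / g2) i (l + 1)) 0 b).

Lemma Ival_imp g1 g2 i l : 0 < g1 -> 0 < g2 -> Imp (I1_integrand (1 / g1) (g1 / g2) i (l + 1)) (Ivalf g1 g2 i l).
Proof.
  intros H1 H2. destruct (I1_exists (1 / g1) (g1 / g2) i (l + 1)) as [v Hv].
  apply Rdiv_lt_0_compat; lra. apply Rdiv_lt_0_compat; lra.
  unfold Ivalf. rewrite (LimR_eq _ v); auto. apply Hv.
Qed.

Lemma hfun_imp g1 g2 N : 0 < g1 -> 0 < g2 ->
  Imp (hfun g1 g2 N) (sum_f_R0 (fun i => sum_f_R0 (fun l => coef g1 g2 i l * Ivalf g1 g2 i l) i) N).
Proof.
  intros H1 H2. unfold hfun.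
  apply (Imp_sum (fun i x => sum_f_R0 (fun l => coef g1 g2 i l * I1_integrand (1 / g1) (g1 / g2) i (l + 1) x) i)).
  intros i _.
  apply (Imp_sum (fun l x => coef g1 g2 i l * I1_integrand (1 / g1) (g1 / g2) i (l + 1) x)).
  intros l _. apply Imp_scal. apply Ival_imp; auto.
Qed.

Lemma q_cont N c x : 0 < c -> continuous (fun x => Sf N (x / c) / (1 + Rabs x)) x.
Proof.
  intros Hc. apply (proj1 (continuity_pt_filterlim _ x)). unfold Rdiv at 2.
  apply continuity_pt_mult.
  - apply (continuity_pt_comp (fun x => x / c) (Sf N)).
    apply (proj2 (continuity_pt_filterlim (fun x => x / c) x)). apply (ex_der_cont (fun x => x / c)). auto_derive. lra.
    apply Sf_cont.
  - apply continuity_pt_inv. apply continuity_pt_plus. apply continuity_pt_const. intros a b; reflexivity.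
    apply Rcontinuity_abs. pose proof (Rabs_pos x). lra.
Qed.

Lemma lim_lnS N c : 0 < c -> is_lim (fun B => - ln (1 + c * B) * Sf N B) p_infty 0.
Proof.
  intros Hc.
  apply (is_lim_le_le_loc (fun B => - (c * sum_f_R0 (fun i => / INR (fact i) * (B ^ S i * exp (- (1 * B)))) N)) (fun _ => 0)).
  - exists 0. intros B HB.
    assert (Hl0 : 0 <= ln (1 + c * B)). { rewrite <- ln_1. apply ln_le. lra. nra. }
    assert (Hl1 : ln (1 + c * B) <= c * B).
    { assert (Hx : 1 + c * B <= exp (c * B)) by apply exp_ineq1_le. apply ln_le in Hx. rewrite ln_exp in Hx. exact Hx. nra. }
    assert (HS := Sf_bounds N B 0 ltac:(lra) ltac:(lra)). destruct HS as [HS0 _].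
    assert (E : B * Sf N B = sum_f_R0 (fun i => / INR (fact i) * (B ^ S i * exp (- (1 * B)))) N).
    { unfold Sf. rewrite scal_sum. apply sum_eq. intros i _. rewrite Rmult_1_l. simpl pow. field. apply INR_fact_neq_0. }
    rewrite <- E. split.
    + assert (ln (1 + c * B) * Sf N B <= c * B * Sf N B) by (apply Rmult_le_compat_r; lra). nra.
    + nra.
  - replace (Finite 0) with (Finite (- (c * 0))) by (f_equal; ring).
    apply (is_lim_opp _ _ (Finite (c * 0))).
    apply (is_lim_scal_l _ c _ (Finite 0)).
    apply (lim_sum (fun i B => / INR (fact i) * (B ^ S i * exp (- (1 * B))))). intros i _.
    replace (Finite 0) with (Finite (/ INR (fact i) * 0)) by (f_equal; ring).
    apply (is_lim_scal_l _ _ _ (Finite 0)). apply lim_polyexp. lra.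
  - apply is_lim_const.
Qed.

Lemma inner_z N c J : 0 < c -> Imp (fun x => Sf N (x / c) / (1 + Rabs x)) J ->
  Imp (fun z => ln (1 + c * z) * (z ^ N * exp (- z) / INR (fact N))) J.
Proof.
  intros Hc HJ.
  set (q := fun x => Sf N (x / c) / (1 + Rabs x)).
  assert (Hq : forall x, continuous q x) by (intros; apply q_cont; auto).
  assert (Hqi : forall a b, ex_RInt q a b) by (intros; apply exRI; auto).
  set (Fa := fun B => - ln (1 + c * B) * Sf N B + RInt q 0 (c * B)).
  assert (HD : forall t, 0 <= t -> is_derive Fa t (ln (1 + c * t) * (t ^ N * exp (- t) / INR (fact N)))).
  { intros t Ht.
    assert (D1 : is_derive (fun t => - ln (1 + c * t) * Sf N t) t
       (- (c / (1 + c * t)) * Sf N t + (- ln (1 + c * t)) * (- (exp (- t) * t ^ N / INR (fact N))))).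
    { apply (is_derive_mult (K:=R_AbsRing) (fun t => - ln (1 + c * t)) (Sf N)).
      auto_derive. nra. field. nra. apply Sf_der. intros; apply Rmult_comm. }
    assert (D2 : is_derive (fun t => RInt q 0 (c * t)) t (c * q (c * t))).
    { assert (Da : is_derive (RInt q 0) (c * t) (q (c * t))).
      { apply (is_derive_RInt (V:=R_CompleteNormedModule) q (RInt q 0) 0 (c * t)).
        apply filter_forall. intros b. exact (RInt_correct (V:=R_CompleteNormedModule) q 0 b (Hqi 0 b)).
        apply Hq. }
      assert (Db : is_derive (fun t => c * t) t c) by (auto_derive; auto; ring).
      exact (is_derive_comp (K:=R_AbsRing) (V:=R_NormedModule) (RInt q 0) (fun t => c * t) t _ _ Da Db). }
    assert (E : ln (1 + c * t) * (t ^ N * exp (- t) / INR (fact N)) =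
      (- (c / (1 + c * t)) * Sf N t + (- ln (1 + c * t)) * (- (exp (- t) * t ^ N / INR (fact N)))) + c * q (c * t)).
    { unfold q. rewrite Rabs_pos_eq by nra. replace (c * t / c) with t by (field; lra).
      field. split; [nra | apply INR_fact_neq_0]. }
    rewrite E. apply (is_derive_plus (K:=R_AbsRing) (V:=R_NormedModule)); auto. }
  assert (HR : forall B, 0 <= B -> is_RInt (fun z => ln (1 + c * z) * (z ^ N * exp (- z) / INR (fact N))) 0 B (Fa B - Fa 0)).
  { intros B HB. apply (is_RInt_derive (V:=R_CompleteNormedModule) Fa).
    - intros x Hx. rewrite Rmin_left, Rmax_right in Hx by lra. apply HD; lra.
    - intros x Hx. rewrite Rmin_left, Rmax_right in Hx by lra. apply ex_der_cont. auto_derive.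
      nra. }
  assert (HF0 : Fa 0 = 0).
  { unfold Fa. rewrite Rmult_0_r, Rplus_0_r, ln_1. rewrite (RInt_point (V:=R_CompleteNormedModule)). 
    change (zero : R) with 0. ring. }
  split.
  - intros b Hb. eexists; apply HR; auto.
  - apply (is_lim_ext_loc Fa).
    { exists 0. intros B HB. rewrite (is_RInt_unique _ _ _ _ (HR B ltac:(lra))). rewrite HF0. ring. }
    unfold Fa. replace (Finite J) with (Finite (0 + J)) by (f_equal; ring).
    apply is_lim_plus'. apply lim_lnS; auto.
    apply lim_p_eps_inv. intros eps He. destruct (lim_p_eps _ _ (proj2 HJ) eps He) as [B0 HB0].
    exists (B0 / c). intros b Hb. apply HB0.
    apply Rmult_lt_compat_l with (r := c) in Hb; auto. replace (c * (B0 / c)) with B0 in Hb by (field; lra).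
    lra.
Qed.

Lemma exp_mono a b : a <= b -> exp a <= exp b.
Proof. intros H. destruct (Req_dec a b). subst; lra. left; apply exp_increasing; lra. Qed.

Theorem lemma3 (g1 g2 : R) (M : nat) :
  0 < g1 -> 0 < g2 -> (1 <= M)%nat ->
  exists (G : R -> R) (Ival : nat -> nat -> R),
    (forall y, 0 <= y ->
       ImpInt (fun z => log2 (1 + g1 * z / (1 + g2 * y)) * gamma_pdf M z * exp_pdf y)
              (G y)) /\
    (forall i l : nat,
       ImpInt (I1_integrand (1 / g1) (g1 / g2) i (l + 1)) (Ival i l)) /\
    ImpInt G
      (log2 (exp 1) *
       sum_f_R0 (fun i =>
         sum_f_R0 (fun l =>
           powerRZ g1 (Z.of_nat l + 1 - Z.of_nat i)%Z
             / (g2 * INR (fact (i - l))) * Ival i l) i) (M - 1)).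
Proof.
  intros H1 H2 HM. destruct M as [|N]; [lia|]. clear HM.
  replace (S N - 1)%nat with N by lia.
  assert (Hl2 : 0 < ln 2) by (pose proof ln_lt_2; lra).
  assert (HCd : 0 <= Cd N) by (apply cond_pos_sum; intros; apply pow_le; lra).
  assert (Ha : 0 < / (4 * g1)) by (apply Rinv_0_lt_compat; lra).
  assert (Hdl : 0 < / (2 * g2)) by (apply Rinv_0_lt_compat; lra).
  assert (HHf := hfun_imp g1 g2 N H1 H2).
  destruct (fubini_inf (kf g1 g2 N) (fun x => Cd N * exp (- (/ (4 * g1) * x))) (fun y => exp (- y))
     (hfun g1 g2 N) (Cd N * / / (4 * g1)) 1 (exp (/ (2 * g2))) (/ (2 * g2))) as [Hin [H [HhH HGH]]].
  - intros; apply kf_cont.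
  - exact Hdl.
  - intros x. apply ex_der_cont. auto_derive. auto.
  - intros y. apply ex_der_cont. auto_derive. auto.
  - intros x _. apply Rmult_le_pos; auto. left; apply exp_pos.
  - intros y Hy. split. left; apply exp_pos. apply exp_mono. lra.
  - apply Imp_scal. apply Imp_exp. auto.
  - apply (Imp_ext (fun y => exp (- (1 * y)))). intros; rewrite Rmult_1_l; auto.
    assert (HI := Imp_exp 1 ltac:(lra)). rewrite Rinv_1 in HI. exact HI.
  - intros x y Hx Hy. apply kf_bounds; auto.
  - intros x Hx. rewrite <- h_eq by auto. apply kf_y_imp; auto.
  - apply (proj1 HHf).
  - set (G := fun y => LimR (fun b => RInt (fun x => kf g1 g2 N x y) 0 b)) in *.
    exists (fun y => / ln 2 * G y), (Ivalf g1 g2).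
    split; [|split].
    + intros y Hy. apply Imp_ImpInt.
      set (c := g1 / (1 + g2 * y)).
      assert (Hc : 0 < c) by (unfold c; apply Rdiv_lt_0_compat; nra).
      assert (HG := Hin y ltac:(lra)).
      assert (HJ : Imp (fun x => Sf N (x / c) / (1 + Rabs x)) (exp y * G y)).
      { apply (Imp_ext (fun x => exp y * kf g1 g2 N x y)).
        - intros x _. unfold kf. replace (x * (1 + g2 * y) / g1) with (x / c) by (unfold c; field; nra).
          rewrite exp_Ropp. pose proof (exp_pos y). pose proof (Rabs_pos x). field. lra.
        - apply Imp_scal. exact HG. }
      assert (HZ := inner_z N c (exp y * G y) Hc HJ).
      apply (Imp_scal _ _ (/ ln 2 * exp (- y))) in HZ.
      replace (/ ln 2 * G y) with (/ ln 2 * exp (- y) * (exp y * G y)).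
      2: { rewrite exp_Ropp. pose proof (exp_pos y). field. lra. }
      refine (Imp_ext _ _ _ _ HZ).
      intros z Hz. unfold log2, gamma_pdf, exp_pdf.
      replace (S N - 1)%nat with N by lia.
      replace (g1 * z / (1 + g2 * y)) with (c * z) by (unfold c; field; nra).
      assert (INR (fact N) <> 0) by apply INR_fact_neq_0.
      field. split; lra.
    + intros i l. apply Imp_ImpInt. apply Ival_imp; auto.
    + apply Imp_ImpInt.
      assert (HHv := Imp_unique _ _ _ HhH HHf).
      replace (log2 (exp 1) * _) with (/ ln 2 * H).
      apply Imp_scal. exact HGH.
      rewrite HHv. unfold log2. rewrite ln_exp. unfold coef. field. lra.
Qed.
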